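(* Assume $K$ is a field and $\tau_{(i)}\neq0$, $\eta_{(i)}\neq-1_K$ for all $i\in\Omega$. Then the following are equivalent: (1) for any $C,D\in\mathcal{I}(\overline{\mathbf{P}})$, $|C|=|D|$ implies $\pi(\Omega,C)=\pi(\Omega,D)$; (2) for any $C,D\in\mathcal{I}(\overline{\mathbf{P}})$, $\pi(\Omega,C)=\pi(\Omega,D)$ if and only if $|C|=|D|$; (3) $\mathbf{P}$ is hierarchical, and for any $u,v\in\Omega$ with $\mathrm{len}(u)=\mathrm{len}(v)$ we have $\eta_{(u)}=\eta_{(v)}$.
   Context: $\Omega$ is a finite set and $\mathbf{P}=(\Omega,\preccurlyeq_{\mathbf{P}})$ a poset; $\overline{\mathbf{P}}$ is its dual poset, and $\mathcal{I}(\overline{\mathbf{P}})$ is the set of ideals of $\overline{\mathbf{P}}$ (up-closed subsets of $\mathbf{P}$). For $Y\subseteq\Omega$: $\max(Y)$ is the set of maximal elements of $Y$ w.r.t. $\preccurlyeq_{\mathbf{P}}$ and $\mathcal{I}(Y)$ is the set of down-closed subsets of $Y$ with the induced order. $\tau,\eta\in K^{\Omega}$. For $D,I\subseteq\Omega$, $\varphi(D,I)=(-1)^{|I\cap D|}\big(\prod_{i\in I-\max(I)}\tau_{(i)}\big)\big(\prod_{i\in\max(I)-D}\eta_{(i)}\big)$ if $I\cap D\subseteq\max(I)$, and $0$ otherwise; for $D\subseteq Y\subseteq\Omega$, $\pi(Y,D)=\sum_{I\in\mathcal{I}(Y)}\varphi(D,I)x^{|I|}\in K[x]$. $\mathrm{len}(y)$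 is the largest cardinality of a chain in $\mathbf{P}$ with greatest element $y$; $\mathbf{P}$ is hierarchical if $\mathrm{len}(u)+1\leqslant\mathrm{len}(v)$ implies $u\preccurlyeq_{\mathbf{P}}v$. *)

(* Defs.v *)
From HB Require Import structures.
From mathcomp Require Import all_boot all_order all_algebra.
Set Implicit Arguments. Unset Strict Implicit. Unset Printing Implicit Defensive.
Import Order.TTheory GRing.Theory.
Local Open Scope ring_scope.

Section PosetDefs.
Variables (d : Order.disp_t) (T : finPOrderType d).

Definition downclosed_in (Y I : {set T}) : bool :=
  (I \subset Y) && [forall i in I, forall j in Y, (j <= i)%O ==> (j \in I)].

(* ideals of the dual poset: up-closed subsets of Omega *)
Definition upclosed (C : {set T}) : bool :=
  [forall i in C, forall j, (i <= j)%O ==> (j \in C)].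

Definition maxs (Y : {set T}) : {set T} :=
  [set i in Y | [forall j in Y, ~~ (i < j)%O]].

Variables (K : fieldType) (tau eta : T -> K).

Definition phi (D I : {set T}) : K :=
  if I :&: D \subset maxs I then
    (-1) ^+ #|I :&: D| * (\prod_(i in I :\: maxs I) tau i)
      * (\prod_(i in maxs I :\: D) eta i)
  else 0.

Definition pi_poly (Y D : {set T}) : {poly K} :=
  \sum_(I : {set T} | downclosed_in Y I) phi D I *: 'X^#|I|.

End PosetDefs.

Section Len.
Variables (d : Order.disp_t) (T : finPOrderType d).

Definition is_chain (C : {set T}) : bool :=
  [forall x in C, forall y in C, (x <= y)%O || (y <= x)%O].

Definition len (y : T) : nat :=
  (\max_(C : {set T} | [&& is_chain C, y \in C & [forall c in C, (c <= y)%O]])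
     #|C|)%N.

Definition hierarchical : Prop :=
  forall u v : T, (len u + 1 <= len v)%N -> (u <= v)%O.
End Len.

(* Main.v *)
Require Import Defs.
From HB Require Import structures.
From mathcomp Require Import all_boot all_order all_algebra.
From mathcomp Require Import ring zify.
Set Implicit Arguments. Unset Strict Implicit. Unset Printing Implicit Defensive.
Import Order.TTheory GRing.Theory.
Local Open Scope ring_scope.

Section Main.
Variables (d : Order.disp_t) (T : finPOrderType d) (K : fieldType)
  (tau eta : T -> K).

Definition mins (Y : {set T}) : {set T} :=
  [set u in Y | [forall z in Y, ~~ (z < u)%O]].

Lemma minsP (Y : {set T}) u : reflect (u \in Y /\ forall z, z \in Y -> ~~ (z < u)%O) (u \in mins Y).
Proof.
rewrite inE; apply: (iffP andP) => [[uY /forall_inP H]|[uY H]]; split => //.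
by apply/forall_inP.
Qed.

Lemma maxsP (Y : {set T}) u : reflect (u \in Y /\ forall z, z \in Y -> ~~ (u < z)%O) (u \in maxs Y).
Proof.
rewrite inE; apply: (iffP andP) => [[uY /forall_inP H]|[uY H]]; split => //.
by apply/forall_inP.
Qed.

Lemma maxs_sub (Y : {set T}) : maxs Y \subset Y.
Proof. by apply/subsetP => u /maxsP []. Qed.

Lemma maxs_antichain (Y S : {set T}) : S \subset mins Y -> maxs S = S.
Proof.
move=> SL; apply/setP => u; apply/maxsP/idP => [[]//|uS]; split => // z zS.
by move/subsetP: SL => SL; case/minsP: (SL z zS) => _ H; apply: H; case/minsP: (SL u uS).
Qed.

Lemma phi_antichain (D S : {set T}) : maxs S = S ->
  phi tau eta D S = \prod_(i in S) (if i \in D then -1 else eta i).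
Proof.
move=> mS; rewrite /phi mS subsetIl setDv big_set0 mulr1.
rewrite [RHS](bigID (mem D)) /=; congr (_ * _).
  rewrite (eq_bigr (fun _ => -1)); last by move=> i /andP[_ iD]; rewrite iD.
  by rewrite prodr_const; congr (_ ^+ _); apply: eq_card => i; rewrite !inE.
rewrite [RHS](eq_bigr eta); last by move=> i /andP[_ iD]; rewrite (negbTE iD).
by apply: eq_bigl => i; rewrite !inE andbC.
Qed.

Lemma phi0 (D : {set T}) : phi tau eta D set0 = 1.
Proof. by rewrite phi_antichain ?big_set0 //; apply/setP => u; rewrite !inE. Qed.


Lemma dcP (Y I : {set T}) : reflect (I \subset Y /\
   forall i j, i \in I -> j \in Y -> (j <= i)%O -> j \in I) (downclosed_in Y I).
Proof.
apply: (iffP andP) => [[IY /forall_inP H]|[IY H]]; split => //.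
  by move=> i j iI jY ji; move/forall_inP: (H i iI) => /(_ j jY)/implyP; apply.
by apply/forall_inP => i iI; apply/forall_inP => j jY; apply/implyP; apply: H.
Qed.

Lemma dc0 (Y : {set T}) : downclosed_in Y set0.
Proof. by apply/dcP; split; [exact: sub0set | move=> i j; rewrite inE]. Qed.

Lemma coef_pi (Y D : {set T}) k :
  (pi_poly tau eta Y D)`_k = \sum_(I | downclosed_in Y I) phi tau eta D I * (#|I| == k)%:R.
Proof.
rewrite /pi_poly coef_sum; apply: eq_bigr => I _.
by rewrite coefZ coefXn eq_sym.
Qed.

Lemma coef0_pi (Y D : {set T}) : (pi_poly tau eta Y D)`_0 = 1.
Proof.
rewrite coef_pi (bigD1 set0) ?dc0 //= cards0 eqxx mulr1 phi0 big1 ?addr0 //.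
move=> I /andP[_ I0]; case: (boolP (#|I| == 0)%N) => [|_]; last by rewrite mulr0.
by rewrite cards_eq0 => /eqP E; rewrite E eqxx in I0.
Qed.

Lemma dc1 (Y : {set T}) w : downclosed_in Y [set w] = (w \in mins Y).
Proof.
apply/dcP/minsP => [[wY H]|[wY H]].
  split; first by rewrite sub1set in wY.
  move=> z zY; apply/negP => zw; have := H w z (set11 w) zY (ltW zw).
  by rewrite inE => /eqP zw'; rewrite zw' ltxx in zw.
split; first by rewrite sub1set.
move=> i j; rewrite inE => /eqP -> jY jw; rewrite inE.
by move: (H j jY); rewrite lt_neqAle jw andbT negbK eq_sym.
Qed.

Lemma coef1_pi (Y D : {set T}) :
  (pi_poly tau eta Y D)`_1 = \sum_(w in mins Y) (if w \in D then -1 else eta w).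
Proof.
rewrite coef_pi.
transitivity (\sum_(I in set1 @: mins Y) phi tau eta D I); last first.
  rewrite big_imset; last by move=> x y _ _ /set1_inj.
  apply: eq_bigr => w _; rewrite phi_antichain; first by rewrite big_set1.
  by apply/setP => u; apply/maxsP/idP => [[]//|uw]; split => // z; rewrite !inE => /eqP ->; move: uw; rewrite inE => /eqP ->; rewrite ltxx.
rewrite [LHS]big_mkcond [RHS]big_mkcond; apply: eq_bigr => I _.
case: (boolP (#|I| == 1)%N) => [/cards1P [w ->]|I1].
  rewrite dc1 mulr1; case: ifP => wm; case: ifP => // /imsetP.
    by move=> H; exfalso; apply: H; exists w.
  by case=> x xm /set1_inj E; rewrite E xm in wm.
rewrite mulr0 if_same; case: ifP => // /imsetP [x _ E].
by rewrite E cards1 in I1.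
Qed.


Lemma prod_expand (L : {set T}) (g : T -> K) :
  \sum_(S : {set T} | S \subset L) (\prod_(i in S) g i) *: 'X^#|S|
  = \prod_(i in L) (1 + g i *: 'X) :> {poly K}.
Proof.
rewrite big_mkcond [RHS]big_mkcond /=.
rewrite (eq_bigr (fun i => (if i \in L then g i *: 'X else 0) + 1)); last first.
  by move=> i _; case: ifP => _; rewrite ?add0r // addrC.
rewrite bigA_distr; apply: eq_bigr => J _.
rewrite -big_mkcond /=.
case: ifP => JL.
  rewrite (eq_bigr (fun i => g i *: 'X)); last by move=> i iJ; rewrite (subsetP JL i iJ).
  by rewrite scaler_prod prodr_const.
case/subsetPn: JL => i iJ iL.
by rewrite (bigD1 i) //= (negbTE iL) mul0r.
Qed.


Lemma mins_sub (Y : {set T}) : mins Y \subset Y.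
Proof. by apply/subsetP => u /minsP []. Qed.

Lemma min_le (Y : {set T}) i j : i \in mins Y -> j \in Y -> (j <= i)%O -> j = i.
Proof.
case/minsP => _ H jY ji; apply/eqP; move: (H j jY).
by rewrite lt_neqAle ji andbT negbK eq_sym.
Qed.

Lemma dc_sub_mins (Y I : {set T}) : I \subset mins Y -> downclosed_in Y I.
Proof.
move=> IL; apply/dcP; split; first exact: subset_trans IL (mins_sub Y).
by move=> i j iI jY ji; rewrite (min_le (subsetP IL i iI) jY ji).
Qed.

Definition gD (D : {set T}) i := if i \in D then -1 else eta i.

Definition lowcond (Y : {set T}) := forall u v, u \in mins Y -> v \in Y :\: mins Y -> (u <= v)%O.

Lemma maxs_LU (Y I : {set T}) : lowcond Y -> I \subset Y :\: mins Y -> I != set0 ->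
  maxs (mins Y :|: I) = maxs I.
Proof.
move=> HL IY /set0Pn [v vI]; apply/setP => x; apply/maxsP/maxsP => [[xLI H]|[xI H]].
  have xI : x \in I.
    case/setUP: xLI => // xL; have := H v; rewrite inE vI orbT => /(_ isT).
    have vY := subsetP IY v vI; rewrite lt_neqAle HL // andbT negbK => /eqP xv.
    by move: vY; rewrite inE -xv xL.
  by split => // z zI; apply: H; rewrite inE zI orbT.
split; first by rewrite inE xI orbT.
move=> z; case/setUP => [zL|]; last exact: H.
have xY : x \in Y by move: (subsetP IY x xI); rewrite inE => /andP[].
by case/minsP: zL => _ Hz; exact: Hz.
Qed.

Lemma decomp (Y D : {set T}) : lowcond Y ->
  pi_poly tau eta Y D = \prod_(i in mins Y) (1 + gD D i *: 'X)
   + \sum_(I in [set I' | downclosed_in (Y :\: mins Y) I' && (I' != set0)])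
       phi tau eta D (mins Y :|: I) *: 'X^(#|mins Y| + #|I|).
Proof.
move=> HL; rewrite /pi_poly (bigID [pred I : {set T} | I \subset mins Y]) /=; congr (_ + _).
  rewrite -prod_expand; apply: congr_big => //.
    by move=> I; apply/andP/idP => [[]//|IL]; split => //; apply: dc_sub_mins.
  by move=> I /andP[_ IL]; rewrite phi_antichain ?(maxs_antichain IL).
set A := [set I' | _].
have dis : forall I : {set T}, I \subset Y :\: mins Y -> mins Y :&: I = set0.
  move=> I IY; apply/setP=> x; rewrite in_setI in_set0; case xL: (x \in mins Y) => //=.
  by apply/negP => xI; move: (subsetP IY x xI); rewrite inE xL.
have AY : forall I : {set T}, I \in A -> I \subset Y :\: mins Y.
  by move=> I; rewrite inE => /andP[/dcP[]].
transitivity (\sum_(I in [set mins Y :|: I' | I' in A]) phi tau eta D I *: 'X^#|I|).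
  apply: eq_bigl => I; apply/idP/idP.
    case/andP => /dcP [IY Hdc] /subsetPn [v vI vL].
    have vY' : v \in Y :\: mins Y by rewrite in_setD vL (subsetP IY v vI).
    have LI : mins Y \subset I.
      apply/subsetP => u uL; apply: (Hdc v u vI (subsetP (mins_sub Y) u uL)).
      exact: HL.
    apply/imsetP; exists (I :\: mins Y).
      rewrite inE; apply/andP; split.
        apply/dcP; split; first by apply: setSD.
        move=> i j; rewrite !in_setD => /andP[iL iI] /andP[jL jY] ji.
        by rewrite jL /=; exact: Hdc i j iI jY ji.
      by apply/set0Pn; exists v; rewrite in_setD vL vI.
    apply/setP=> x; rewrite in_setU in_setD.
    by have [xL|xL] := boolP (x \in mins Y) => /=; [rewrite (subsetP LI x xL) | ].
  case/imsetP => I' I'A ->; have I'Y := AY I' I'A.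
  move: I'A; rewrite inE => /andP[/dcP [_ Hdc'] /set0Pn [v vI']].
  apply/andP; split.
    apply/dcP; split.
      by rewrite subUset mins_sub (subset_trans I'Y) // subsetDl.
    move=> i j; rewrite in_setU => /orP [iL | iI'] jY ji; rewrite in_setU.
      by rewrite (min_le iL jY ji) iL.
    case jL: (j \in mins Y) => //=; apply: (Hdc' i j iI'); last exact: ji.
    by rewrite in_setD jL jY.
  apply/subsetPn; exists v; first by rewrite in_setU vI' orbT.
  by move: (subsetP I'Y v vI'); rewrite in_setD => /andP[].
rewrite big_imset; last first.
  move=> I1 I2 /AY I1Y /AY I2Y E.
  have K0 : forall I : {set T}, I \subset Y :\: mins Y -> (mins Y :|: I) :\: mins Y = I.
    move=> I IY; apply/setP => x; rewrite in_setD in_setU.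
    case xL: (x \in mins Y) => //=; apply/esym/negP => xI.
    by move: (subsetP IY x xI); rewrite in_setD xL.
  by rewrite -(K0 _ I1Y) E K0.
apply: eq_bigr => I /AY IY; congr (_ *: 'X^_).
by rewrite cardsU dis // cards0 subn0.
Qed.


Lemma prod_setU (A B : {set T}) (F : T -> K) : A :&: B = set0 ->
  \prod_(i in A :|: B) F i = \prod_(i in A) F i * \prod_(i in B) F i.
Proof.
move=> AB; rewrite -bigU; first by apply: eq_bigl => i; rewrite !inE.
by rewrite -setI_eq0 AB.
Qed.

Lemma disLI (Y I : {set T}) : I \subset Y :\: mins Y -> mins Y :&: I = set0.
Proof.
move=> IY; apply/setP=> x; rewrite in_setI in_set0; case xL: (x \in mins Y) => //=.
by apply/negP => xI; move: (subsetP IY x xI); rewrite in_setD xL.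
Qed.

Lemma phi_LU_in (Y D I : {set T}) : lowcond Y -> D \subset Y :\: mins Y ->
  I \subset Y :\: mins Y -> I != set0 ->
  phi tau eta D (mins Y :|: I) = (\prod_(i in mins Y) tau i) * phi tau eta D I.
Proof.
move=> HL DY IY I0; rewrite /phi maxs_LU //.
have DL := disLI DY.
have -> : (mins Y :|: I) :&: D = I :&: D.
  apply/setP => x; rewrite !in_setI in_setU andb_orl.
  case xL: (x \in mins Y) => //=; case xD: (x \in D) => //=.
  by move/setP: DL => /(_ x); rewrite in_setI in_set0 xL xD.
case: ifP => _; last by rewrite mulr0.
rewrite setDUl prod_setU; last first.
  apply/setP=> x; rewrite in_setI !in_setD in_set0; case xL: (x \in mins Y) => /=.
    apply/negP => /and3P[_ _ xI]; move/setP: (disLI IY) => /(_ x).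
    by rewrite in_setI in_set0 xL xI.
  by rewrite andbF.
have -> : mins Y :\: maxs I = mins Y.
  apply/setP=> x; rewrite in_setD; case xL: (x \in mins Y); rewrite ?andbF //=.
  rewrite andbT; apply/negP => xm; have xI := subsetP (maxs_sub I) x xm.
  by move/setP: (disLI IY) => /(_ x); rewrite in_setI in_set0 xL xI.
by rewrite !mulrA [_ * (\prod_(i in mins Y) tau i)]mulrC.
Qed.

Lemma phi_LU_full (Y D I : {set T}) u : lowcond Y -> u \in mins Y -> u \in D ->
  I \subset Y :\: mins Y -> I != set0 -> phi tau eta D (mins Y :|: I) = 0.
Proof.
move=> HL uL uD IY I0; rewrite /phi maxs_LU //; case: ifP => // /subsetP H.
case/set0Pn: I0 => v vI.
have := H u; rewrite in_setI in_setU uL uD => /(_ isT) /maxsP [_ /(_ v vI)].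
rewrite lt_neqAle HL ?(subsetP IY v vI) // andbT negbK => /eqP uv.
by move: (subsetP IY v vI); rewrite in_setD -uv uL.
Qed.

Lemma decomp_in (Y D : {set T}) : lowcond Y -> D \subset Y :\: mins Y ->
  pi_poly tau eta Y D = \prod_(i in mins Y) (1 + eta i *: 'X)
   + ((\prod_(i in mins Y) tau i) *: 'X^#|mins Y|) * (pi_poly tau eta (Y :\: mins Y) D - 1).
Proof.
move=> HL DY; rewrite decomp //; congr (_ + _).
  apply: eq_bigr => i iL; rewrite /gD; case: ifP => // iD.
  by move: (subsetP DY i iD); rewrite in_setD iL.
rewrite [pi_poly _ _ (Y :\: mins Y) D](bigD1 set0) ?dc0 //= phi0 cards0 expr0 scale1r.
rewrite addrC addrK mulr_sumr; apply: congr_big => //.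
  by move=> I; rewrite inE.
move=> I; rewrite inE => /andP[/dcP[IY _] I0].
rewrite phi_LU_in // -scalerAl -scalerAr scalerA exprD //.

Qed.

Lemma decomp_full (Y D : {set T}) u : lowcond Y -> u \in mins Y -> u \in D ->
  pi_poly tau eta Y D = \prod_(i in mins Y) (1 + gD D i *: 'X).
Proof.
move=> HL uL uD; rewrite decomp // [X in _ + X]big1 ?addr0 //.
move=> I; rewrite inE => /andP[/dcP[IY _] I0].
by rewrite (phi_LU_full HL uL uD IY I0) scale0r.
Qed.


Definition len_in (Y : {set T}) (y : T) : nat :=
  (\max_(C : {set T} | [&& C \subset Y, is_chain C, y \in C & [forall c in C, (c <= y)%O]])
     #|C|)%N.

Lemma len_inT y : len_in setT y = len y.
Proof. by rewrite /len_in /len; apply: eq_bigl => C; rewrite subsetT. Qed.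

Lemma chainP (C : {set T}) : reflect (forall x y, x \in C -> y \in C -> (x <= y)%O || (y <= x)%O)
  (is_chain C).
Proof.
apply: (iffP forall_inP) => [H x y xC yC|H x xC].
  by move/forall_inP: (H x xC) => /(_ y yC).
by apply/forall_inP => y yC; apply: H.
Qed.

Lemma len_ge (Y C : {set T}) y : C \subset Y -> is_chain C -> y \in C ->
  (forall c, c \in C -> (c <= y)%O) -> (#|C| <= len_in Y y)%N.
Proof.
move=> CY ch yC H; apply: (@leq_bigmax_cond _ _ (fun C : {set T} => #|C|) C).
by rewrite CY ch yC; apply/forall_inP.
Qed.

Lemma len_le (Y : {set T}) y n :
  (forall C : {set T}, C \subset Y -> is_chain C -> y \in C ->
     (forall c, c \in C -> (c <= y)%O) -> (#|C| <= n)%N) -> (len_in Y y <= n)%N.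
Proof.
move=> H; apply/bigmax_leqP => C /and4P [CY ch yC /forall_inP Hc].
exact: H.
Qed.

Lemma chain1 (y : T) : is_chain [set y].
Proof. by apply/chainP => a b; rewrite !inE => /eqP -> /eqP ->; rewrite lexx. Qed.

Lemma len_pos (Y : {set T}) y : y \in Y -> (1 <= len_in Y y)%N.
Proof.
move=> yY; rewrite -(cards1 y); apply: len_ge; rewrite ?sub1set ?set11 ?chain1 //.
by move=> c; rewrite inE => /eqP ->.
Qed.

Lemma len_min (Y : {set T}) y : y \in mins Y -> len_in Y y = 1%N.
Proof.
move=> yL; apply/eqP; rewrite eqn_leq len_pos ?(subsetP (mins_sub Y) y yL) // andbT.
apply: len_le => C CY _ yC H; rewrite -(cards1 y); apply: subset_leq_card.
apply/subsetP => c cC; rewrite inE; apply/eqP.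
exact: min_le yL (subsetP CY c cC) (H c cC).
Qed.

Lemma len_nonmin (Y : {set T}) y : y \in Y :\: mins Y -> (2 <= len_in Y y)%N.
Proof.
rewrite in_setD => /andP [yL yY].
have : ~~ [forall z in Y, ~~ (z < y)%O] by move: yL; rewrite inE yY.
rewrite negb_forall_in => /exists_inP [z zY]; rewrite negbK => zy.
have -> : 2%N = #|[set z; y]| by rewrite cards2 (lt_eqF zy).
apply: len_ge.
- by apply/subsetP => c; rewrite !inE => /orP [] /eqP ->.
- apply/chainP => a b; rewrite !inE => /orP [] /eqP -> /orP [] /eqP ->;
  by rewrite ?lexx ?(ltW zy) ?orbT.
- by rewrite !inE eqxx orbT.
- by move=> c; rewrite !inE => /orP [] /eqP ->; rewrite ?lexx ?(ltW zy).
Qed.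

Lemma exists_min (Y : {set T}) : Y != set0 -> exists u, u \in mins Y.
Proof.
case/set0Pn => y0 y0Y.
case: (@arg_minnP _ y0 (mem Y) (fun u => #|[set z in Y | (z < u)%O]|) y0Y) => u uY Hu.
exists u; apply/minsP; split => // z zY; apply/negP => zu.
have := Hu z zY; rewrite leqNgt => /negP; apply.
apply: proper_card; apply/properP; split.
  apply/subsetP => w; rewrite !inE => /andP [-> wz] /=; exact: lt_trans wz zu.
by exists z; rewrite !inE ?zY ?zu ?ltxx.
Qed.


Lemma len_shift (Y : {set T}) y : lowcond Y -> y \in Y :\: mins Y ->
  len_in Y y = (len_in (Y :\: mins Y) y).+1.
Proof.
move=> HL yY'; have [yL yY] : y \notin mins Y /\ y \in Y by move: yY'; rewrite in_setD => /andP.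
have [u uL] : exists u, u \in mins Y by apply: exists_min; apply/set0Pn; exists y.
have uY := subsetP (mins_sub Y) u uL.
apply/eqP; rewrite eqn_leq; apply/andP; split.
  apply: len_le => C CY ch yC H.
  rewrite -(cardsID (mins Y) C) addnC -addn1 leq_add //.
    apply: len_ge => //.
    - by apply: setSD.
    - by apply/chainP => a b /setDP [aC _] /setDP [bC _]; move/chainP: ch; apply.
    - by rewrite in_setD yL yC.
    - by move=> c /setDP [cC _]; apply: H.
  case: (boolP (C :&: mins Y == set0)) => [/eqP -> | /set0Pn [a /setIP [aC aL]]].
    by rewrite cards0.
  rewrite -(cards1 a); apply: subset_leq_card; apply/subsetP => b /setIP [bC bL].
  rewrite inE; move/chainP: ch => /(_ a b aC bC) /orP [ab|ba].
    by rewrite (min_le bL (subsetP CY a aC) ab).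
  by rewrite (min_le aL (subsetP CY b bC) ba).
have : (len_in (Y :\: mins Y) y <= (len_in Y y).-1)%N.
  apply: len_le => C CY ch yC H.
  have uC : u \notin C.
    by apply/negP => /(subsetP CY); rewrite in_setD uL.
  suff : (#|u |: C| <= len_in Y y)%N by rewrite cardsU1 uC; case: (len_in Y y).
  apply: len_ge.
  - by rewrite subUset sub1set uY (subset_trans CY) // subsetDl.
  - apply/chainP => a b; rewrite !inE => /orP [/eqP ->|aC] /orP [/eqP ->|bC].
    + by rewrite lexx.
    + by rewrite HL ?(subsetP CY b bC).
    + by rewrite (HL u a uL (subsetP CY a aC)) orbT.
    + by move/chainP: ch; apply.
  - by rewrite !inE yC orbT.
  - by move=> c; rewrite !inE => /orP [/eqP ->|cC]; [apply: HL | apply: H].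
have := len_pos yY; case: (len_in Y y) => //.
Qed.


Definition P3_in (Y : {set T}) :=
  (forall u v, u \in Y -> v \in Y -> (len_in Y u < len_in Y v)%N -> (u <= v)%O) /\
  (forall u v, u \in Y -> v \in Y -> len_in Y u = len_in Y v -> eta u = eta v).

Lemma P3_decomp (Y : {set T}) : P3_in Y <->
  [/\ lowcond Y, (forall u v, u \in mins Y -> v \in mins Y -> eta u = eta v)
    & P3_in (Y :\: mins Y)].
Proof.
have LY := subsetP (mins_sub Y).
have Y'Y : forall x, x \in Y :\: mins Y -> x \in Y by move=> x /setDP [].
split.
  case=> H1 H2.
  have HL : lowcond Y.
    move=> u v uL vY'; apply: H1; [exact: LY | exact: Y'Y |].
    by rewrite len_min //; exact: len_nonmin.
  split => //.
    by move=> u v uL vL; apply: H2; [exact: LY | exact: LY | rewrite !len_min].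
  split.
    move=> u v uY vY ltuv; apply: H1; [exact: Y'Y | exact: Y'Y |].
    by rewrite (len_shift HL uY) (len_shift HL vY).
  move=> u v uY vY E; apply: H2; [exact: Y'Y | exact: Y'Y |].
  by rewrite (len_shift HL uY) (len_shift HL vY) E.
case=> HL Heta [H1 H2]; split.
  move=> u v uY vY ltuv.
  have vY' : v \in Y :\: mins Y.
    rewrite in_setD vY andbT; apply/negP => vL.
    by move: ltuv; rewrite (len_min vL) ltnS leqn0 => /eqP; have := len_pos uY; case: (len_in Y u).
  case: (boolP (u \in mins Y)) => uL; first exact: HL.
  have uY' : u \in Y :\: mins Y by rewrite in_setD uL uY.
  by apply: H1 => //; move: ltuv; rewrite (len_shift HL uY') (len_shift HL vY').
move=> u v uY vY E.
case: (boolP (u \in mins Y)) => uL; case: (boolP (v \in mins Y)) => vL.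
- exact: Heta.
- have vY' : v \in Y :\: mins Y by rewrite in_setD vL vY.
  by move: (len_nonmin vY'); rewrite -E len_min.
- have uY' : u \in Y :\: mins Y by rewrite in_setD uL uY.
  by move: (len_nonmin uY'); rewrite E len_min.
have uY' : u \in Y :\: mins Y by rewrite in_setD uL uY.
have vY' : v \in Y :\: mins Y by rewrite in_setD vL vY.
by apply: H2 => //; move: E; rewrite (len_shift HL uY') (len_shift HL vY') => -[].
Qed.


Definition up_in (Y C : {set T}) :=
  C \subset Y /\ forall c z, c \in C -> z \in Y -> (c <= z)%O -> z \in C.

Definition P1_in (Y : {set T}) := forall C D, up_in Y C -> up_in Y D ->
  #|C| = #|D| -> pi_poly tau eta Y C = pi_poly tau eta Y D.

Lemma coef1_eq (Y C D : {set T}) : pi_poly tau eta Y C = pi_poly tau eta Y D ->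
  \sum_(w in mins Y) (gD C w - gD D w) = 0.
Proof.
move=> E; rewrite sumrB; have := congr1 (fun p : {poly K} => p`_1) E.
by rewrite !coef1_pi /gD => ->; rewrite subrr.
Qed.

Lemma up_lift (Y C : {set T}) : up_in (Y :\: mins Y) C -> up_in Y C.
Proof.
case=> CY H; split; first exact: subset_trans CY (subsetDl _ _).
move=> c z cC zY cz; case: (boolP (z \in mins Y)) => zL.
  have cz' := min_le zL (subsetP (subset_trans CY (subsetDl _ _)) c cC) cz.
  by move: (subsetP CY c cC); rewrite in_setD cz' zL.
by apply: H cz => //; rewrite in_setD zL.
Qed.

Lemma kX_neq0 (Y : {set T}) : (forall i, tau i != 0) ->
  (\prod_(i in mins Y) tau i) *: 'X^#|mins Y| != 0 :> {poly K}.
Proof.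
move=> Ht; rewrite scaler_eq0 negb_or; apply/andP; split.
  by rewrite prodf_seq_neq0; apply/allP => i _; apply/implyP => _; exact: Ht.
by rewrite monic_neq0 // monicXn.
Qed.


Lemma P1_eta (Y : {set T}) : P1_in Y ->
  forall u v, u \in mins Y -> v \in mins Y -> eta u = eta v.
Proof.
move=> P1 u v uL vL; case: (eqVneq u v) => [-> //|uv].
have LY := subsetP (mins_sub Y).
have upD1 : forall w, w \in mins Y -> up_in Y (Y :\ w).
  move=> w wL; split; first exact: subsetDl.
  move=> c z; rewrite !in_setD1 => /andP [cw cY] zY cz; rewrite zY andbT.
  by apply/eqP => zw; rewrite zw in cz; move: cw; rewrite (min_le wL cY cz) eqxx.
have cE : #|Y :\ u| = #|Y :\ v|.
  move: (cardsD1 u Y) (cardsD1 v Y); rewrite (LY u uL) (LY v vL) /= => E1 E2.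
  by rewrite E1 in E2; case: E2.
have := coef1_eq (P1 _ _ (upD1 u uL) (upD1 v vL) cE).
rewrite (bigD1 u) //= (bigD1 v) /=; last by rewrite vL eq_sym.
rewrite big1; last first.
  move=> w /andP [/andP [wL wu] wv]; rewrite /gD !in_setD1 wu wv LY //.
  by rewrite subrr.
rewrite /gD !in_setD1 eqxx uv eq_sym uv eqxx LY // LY //= => E.
apply/eqP; rewrite -subr_eq0 -E; apply/eqP; ring.
Qed.


Lemma P1_low (Y : {set T}) : (forall i, eta i != -1) -> P1_in Y -> lowcond Y.
Proof.
move=> Heta P1 u v uL vY'; apply/negPn/negP => nuv.
have [vL vY] : v \notin mins Y /\ v \in Y by move: vY'; rewrite in_setD => /andP.
have LY := subsetP (mins_sub Y); have uY := LY u uL.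
set F := [set z | (z <= v)%O]; set G := [set z | (z < v)%O || (z == u)].
set S := [set z | (z < v)%O].
have upC : up_in Y (Y :\: F).
  split; first exact: subsetDl.
  move=> c z; rewrite !in_setD !inE => /andP [ncv cY] zY cz; rewrite zY andbT.
  by apply/negP => zv; move: ncv; rewrite (le_trans cz zv).
have upD : up_in Y (Y :\: G).
  split; first exact: subsetDl.
  move=> c z; rewrite !in_setD !inE negb_or => /andP [/andP [ncv ncu] cY] zY cz.
  rewrite zY andbT negb_or; apply/andP; split.
    by apply/negP => zv; move: ncv; rewrite (le_lt_trans cz zv).
  by apply/negP => /eqP zu; rewrite zu in cz; move: ncu; rewrite (min_le uL cY cz) eqxx.
have EF : Y :&: F = v |: (Y :&: S).
  apply/setP => x; rewrite !inE le_eqVlt; case: (eqVneq x v) => [->|] //=.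
  by rewrite vY.
have EG : Y :&: G = u |: (Y :&: S).
  apply/setP => x; rewrite !inE; case: (eqVneq x u) => [->|] /=.
    by rewrite uY orbT.
  by rewrite orbF.
have cE : #|Y :\: F| = #|Y :\: G|.
  have := cardsID F Y; have := cardsID G Y; rewrite EF EG !cardsU1 !inE ltxx andbF.
  have -> : (u < v)%O = false by apply/negP => /ltW uv; rewrite uv in nuv.
  rewrite andbF /= => E1 E2; rewrite -E1 in E2.
  by move/eqP: E2; rewrite eqn_add2l => /eqP.
have := coef1_eq (P1 _ _ upC upD cE).
rewrite (bigD1 u) //= big1; last first.
  move=> w /andP [wL wu]; rewrite /gD !in_setD !inE (LY w wL) (negbTE wu) orbF !andbT.
  have wv : w != v by apply/negP => /eqP wv; move: vL; rewrite -wv wL.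
  by rewrite le_eqVlt (negbTE wv) /= subrr.
rewrite /gD !in_setD !inE uY eqxx orbT nuv /= addr0 => /eqP.
by rewrite subr_eq0 => /eqP E; move: (Heta u); rewrite -E eqxx.
Qed.


Lemma P1_down (Y : {set T}) : (forall i, tau i != 0) -> lowcond Y -> P1_in Y ->
  P1_in (Y :\: mins Y).
Proof.
move=> Ht HL P1 C D upC upD cE.
have := P1 C D (up_lift upC) (up_lift upD) cE.
rewrite (decomp_in HL (proj1 upC)) (decomp_in HL (proj1 upD)) => /addrI /mulfI.
by move=> /(_ (kX_neq0 Y Ht)) /(congr1 (fun p => p + 1)); rewrite !subrK.
Qed.

Lemma P1_P3 : (forall i, tau i != 0) -> (forall i, eta i != -1) ->
  forall Y, P1_in Y -> P3_in Y.
Proof.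
move=> Ht He Y; move: {2}#|Y| (leqnn #|Y|) => n; elim: n Y => [|n IH] Y.
  rewrite leqn0 cards_eq0 => /eqP -> _.
  by split=> u v; rewrite inE.
move=> cY P1; case: (eqVneq Y set0) => [-> |Y0].
  by split=> u v; rewrite inE.
have HL := P1_low He P1.
apply/P3_decomp; split => //; first exact: P1_eta.
apply: IH; last exact: P1_down.
have [u uL] := exists_min Y0.
rewrite -ltnS; apply: leq_trans cY; apply: proper_card.
by apply/properP; split; [exact: subsetDl | exists u; rewrite ?(subsetP (mins_sub Y)) // in_setD uL].
Qed.


Lemma size_lin (e : K) : (size ((1 + e *: 'X)%R : {poly K}) <= 2)%N.
Proof.
apply: leq_trans (size_polyD _ _) _; rewrite size_poly1 geq_max /=.
by apply: leq_trans (size_scale_leq _ _) _; rewrite size_polyX.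
Qed.

Lemma size_pq (e : K) a b :
  (size (((1 - 'X) ^+ a * (1 + e *: 'X) ^+ b)%R : {poly K}) <= (a + b).+1)%N.
Proof.
apply: leq_trans (size_polyMleq _ _) _.
have h1 : (size (((1 - 'X : {poly K}) ^+ a)%R) <= a.+1)%N.
  apply: leq_trans (size_poly_exp_leq _ _) _.
  have : (size ((1 - 'X)%R : {poly K}) <= 2)%N.
    apply: leq_trans (size_polyD _ _) _; rewrite size_poly1 size_polyN size_polyX //.
  by case: (size _) => [|[|[|k]]] //= _; rewrite ?mul0n ?mul1n.
have h2 : (size (((1 + e *: 'X : {poly K}) ^+ b)%R) <= b.+1)%N.
  apply: leq_trans (size_poly_exp_leq _ _) _.
  by move: (size_lin e); case: (size _) => [|[|[|k]]] //= _; rewrite ?mul0n ?mul1n.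
have := leq_add h1 h2; case: (_ + _)%N => [|s] /=; rewrite ?addSn ?addnS ?ltnS //.
Qed.

Lemma nz0 (P : {poly K}) : P.[0] != 0 -> P != 0.
Proof. by apply: contraNneq => ->; rewrite horner0. Qed.

Lemma pq_inj (e : K) a b c d' : e != -1 -> (a + b = c + d')%N ->
  (1 - 'X) ^+ a * (1 + e *: 'X) ^+ b = (1 - 'X) ^+ c * (1 + e *: 'X) ^+ d' :> {poly K} ->
  a = c.
Proof.
have key : forall a b c d', e != -1 -> (a + b = c + d')%N -> (a <= c)%N ->
  (1 - 'X) ^+ a * (1 + e *: 'X) ^+ b = (1 - 'X) ^+ c * (1 + e *: 'X) ^+ d' :> {poly K} ->
  a = c.
  move=> x1 y1 z1 w1 He Es ac; have [k Ek] : exists k, z1 = (x1 + k)%N by exists (z1 - x1)%N; lia.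
  subst z1.
  have nz : forall n, (1 - 'X : {poly K}) ^+ n != 0.
    by move=> n; apply: nz0; rewrite !hornerE subr0 expr1n oner_eq0.
  have nz' : (1 + e *: 'X : {poly K}) ^+ w1 != 0.
    by apply: nz0; rewrite !hornerE expr1n oner_eq0.
  have -> : y1 = (w1 + k)%N by lia.
  rewrite !exprD -!mulrA => /(mulfI (nz x1)).
  rewrite [_ ^+ k * _]mulrC => /(mulfI nz').
  move=> /(congr1 (fun P => P.[1])); rewrite !hornerE subrr.
  clear ac Es; case: k => [|k]; first by rewrite addn0.
  rewrite expr0n /= => /eqP; rewrite expf_eq0 /= addr_eq0 => /eqP E.
  by move: He; rewrite -[e]opprK -E eqxx.
move=> He Es E; case: (leqP a c) => ac; first exact: key E.
by apply/esym; apply: (key c d' a b He (esym Es) (ltnW ac)).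
Qed.


Lemma mixed_neq (e c : K) (m a b : nat) (P : {poly K}) : e != -1 -> c != 0 ->
  P`_0 = 1 -> (a + b = m)%N -> (1 <= a)%N ->
  (1 + e *: 'X) ^+ m + (c *: 'X^m) * (P - 1) <> (1 - 'X) ^+ a * (1 + e *: 'X) ^+ b.
Proof.
move=> He c0 P0 abm a1 E.
have Q0 : (P - 1)`_0 = 0 by rewrite coefB P0 coefC eqxx subrr.
case: (eqVneq (P - 1) 0) => [PE|PN].
  have E' : (1 - 'X) ^+ 0 * (1 + e *: 'X) ^+ m = (1 - 'X) ^+ a * (1 + e *: 'X) ^+ b :> {poly K}.
    by rewrite expr0 mul1r -E PE mulr0 addr0.
  by have a0 := pq_inj He (etrans (add0n m) (esym abm)) E'; rewrite -a0 in a1.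
have sP : (2 <= size ((P - 1)%R))%N.
  rewrite ltnNge; apply/negP => /size1_polyC; rewrite Q0 => Pc.
  by move: PN; rewrite Pc eqxx.
have : (size ((c *: 'X^m) * (P - 1))%R <= m.+1)%N.
  have -> : (c *: 'X^m) * (P - 1) = (1 - 'X) ^+ a * (1 + e *: 'X) ^+ b - (1 + e *: 'X) ^+ m.
    by rewrite -E [RHS]addrC addKr.
  apply: leq_trans (size_polyD _ _) _; rewrite size_polyN geq_max; apply/andP; split.
    by rewrite -abm; exact: size_pq.
  by have := size_pq e 0 m; rewrite expr0 mul1r.
rewrite -scalerAl size_scale // mulrC size_mulXn // -addn1 leq_add2l => H; by have := leq_trans sP H.
Qed.


Definition P2_in (Y : {set T}) := forall C D, up_in Y C -> up_in Y D ->
  (pi_poly tau eta Y C = pi_poly tau eta Y D <-> #|C| = #|D|).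

Lemma form_in (Y C : {set T}) e : lowcond Y -> (forall i, i \in mins Y -> eta i = e) ->
  C \subset Y :\: mins Y ->
  pi_poly tau eta Y C = (1 + e *: 'X) ^+ #|mins Y|
   + ((\prod_(i in mins Y) tau i) *: 'X^#|mins Y|) * (pi_poly tau eta (Y :\: mins Y) C - 1).
Proof.
move=> HL He CY; rewrite (decomp_in HL CY); congr (_ + _).
by rewrite -prodr_const; apply: eq_bigr => i iL; rewrite He.
Qed.

Lemma form_full (Y C : {set T}) e u : lowcond Y -> (forall i, i \in mins Y -> eta i = e) ->
  u \in mins Y -> u \in C ->
  pi_poly tau eta Y C = (1 - 'X) ^+ #|mins Y :&: C| * (1 + e *: 'X) ^+ #|mins Y :\: C|.
Proof.
move=> HL He uL uC; rewrite (decomp_full HL uL uC) (bigID (mem C)) /=; congr (_ * _).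
  rewrite -prodr_const; apply: congr_big => // [i|i /andP [_ iC]]; first by rewrite !inE.
  by rewrite /gD iC scaleN1r.
rewrite -prodr_const; apply: congr_big => // [i|i /andP [iL iC]]; first by rewrite !inE andbC.
by rewrite /gD (negbTE iC) He.
Qed.


Lemma P3_P2 : (forall i, tau i != 0) -> (forall i, eta i != -1) ->
  forall Y, P3_in Y -> P2_in Y.
Proof.
move=> Ht He Y; move: {2}#|Y| (leqnn #|Y|) => n; elim: n Y => [|n IH] Y cY P3;
  case: (eqVneq Y set0) => [-> |Y0].
- move=> C D [CY _] [DY _]; move: CY DY; rewrite !subset0 => /eqP -> /eqP ->.
  by [].
- by move: cY; rewrite leqn0 cards_eq0 (negbTE Y0).
- move=> C D [CY _] [DY _]; move: CY DY; rewrite !subset0 => /eqP -> /eqP ->.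
  by [].
have [HL Heq P3'] := (P3_decomp Y).1 P3.
have [u0 u0L] := exists_min Y0.
have HeL : forall i, i \in mins Y -> eta i = eta u0 by move=> i iL; exact: Heq.
have IH' : P2_in (Y :\: mins Y).
  apply: IH P3'; rewrite -ltnS; apply: leq_trans cY; apply: proper_card.
  apply/properP; split; first exact: subsetDl.
  by exists u0; rewrite ?(subsetP (mins_sub Y)) // in_setD u0L.
have cnz : \prod_(i in mins Y) tau i != 0.
  by rewrite prodf_seq_neq0; apply/allP => i _; apply/implyP => _; exact: Ht.
have cls : forall C, up_in Y C -> C \subset Y :\: mins Y \/ exists u, u \in mins Y /\ u \in C.
  move=> C [CY _]; case: (boolP [exists u in mins Y, u \in C]).
    by case/exists_inP => u uL uC; right; exists u.
  rewrite negb_exists_in => /forall_inP H; left; apply/subsetP => x xC.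
  rewrite in_setD (subsetP CY x xC) andbT; apply/negP => xL.
  by move: (H x xL); rewrite xC.
have up_down : forall C, up_in Y C -> C \subset Y :\: mins Y -> up_in (Y :\: mins Y) C.
  move=> C [_ H] CY'; split => // c z cC /setDP [zY _]; exact: H.
have card_full : forall C u, up_in Y C -> u \in mins Y -> u \in C ->
    #|C| = (#|Y :\: mins Y| + #|mins Y :&: C|)%N.
  move=> C u [CY H] uL uC.
  have -> : Y :\: mins Y = C :\: mins Y.
    apply/setP => x; rewrite !in_setD; case: (boolP (x \in mins Y)) => //= xL.
    apply/idP/idP => [xY|xC]; last exact: (subsetP CY).
    by apply: (H u x uC xY); apply: HL => //; rewrite in_setD xL.
  by rewrite setIC addnC cardsID.
have card_L : forall C, (#|mins Y :&: C| + #|mins Y :\: C| = #|mins Y|)%N.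
  by move=> C; rewrite cardsID.
move=> C D upC upD.
case: (cls C upC) => [CY' | [u [uL uC]]]; case: (cls D upD) => [DY' | [u' [uL' uD]]].
- rewrite (form_in HL HeL CY') (form_in HL HeL DY'); split.
    move=> /addrI /(mulfI (kX_neq0 Y Ht)) /(congr1 (fun p => p + 1)); rewrite !subrK.
    by move/(IH' C D (up_down C upC CY') (up_down D upD DY')).
  by move/(IH' C D (up_down C upC CY') (up_down D upD DY')) => ->.
- rewrite (form_in HL HeL CY') (form_full HL HeL uL' uD); split.
    move=> E; exfalso; apply: (mixed_neq (He u0) cnz (coef0_pi _ _) (card_L D) _ E).
    by rewrite card_gt0; apply/set0Pn; exists u'; rewrite in_setI uL' uD.
  move=> cE; exfalso; move: (subset_leq_card CY'); rewrite cE (card_full D u') //.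
  have : (0 < #|mins Y :&: D|)%N by rewrite card_gt0; apply/set0Pn; exists u'; rewrite in_setI uL' uD.
  lia.
- rewrite (form_in HL HeL DY') (form_full HL HeL uL uC); split.
    move=> E; exfalso; apply: (mixed_neq (He u0) cnz (coef0_pi _ _) (card_L C) _ (esym E)).
    by rewrite card_gt0; apply/set0Pn; exists u; rewrite in_setI uL uC.
  move=> cE; exfalso; move: (subset_leq_card DY'); rewrite -cE (card_full C u) //.
  have : (0 < #|mins Y :&: C|)%N by rewrite card_gt0; apply/set0Pn; exists u; rewrite in_setI uL uC.
  lia.
rewrite (form_full HL HeL uL uC) (form_full HL HeL uL' uD); split.
  move=> E; have Es : (#|mins Y :&: C| + #|mins Y :\: C| = #|mins Y :&: D| + #|mins Y :\: D|)%N.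
    by rewrite !card_L.
  by rewrite (card_full C u) // (card_full D u') // (pq_inj (He u0) Es E).
rewrite (card_full C u) // (card_full D u') // => /addnI E1.
have E2 : #|mins Y :\: C| = #|mins Y :\: D|.
  by apply/eqP; rewrite -(eqn_add2l #|mins Y :&: C|) card_L E1 card_L.
by rewrite E1 E2.
Qed.

End Main.

Lemma upT (d : Order.disp_t) (T : finPOrderType d) (C : {set T}) :
  up_in setT C <-> upclosed C.
Proof.
split.
  case=> _ H; apply/forall_inP => i iC; apply/forallP => j; apply/implyP => ij.
  exact: H ij.
move=> /forall_inP H; split; first exact: subsetT.
by move=> c z cC _ cz; move/forallP: (H c cC) => /(_ z) /implyP; apply.
Qed.

Unset Implicit Arguments.
Set Strict Implicit.

Theorem theorem3p3 (d : Order.disp_t) (T : finPOrderType d) (K : fieldType)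
  (tau eta : T -> K)
  (Htau : forall i : T, tau i != 0)
  (Heta : forall i : T, eta i != -1) :
  let P1 := forall C D : {set T}, upclosed C -> upclosed D ->
              #|C| = #|D| -> pi_poly tau eta setT C = pi_poly tau eta setT D in
  let P2 := forall C D : {set T}, upclosed C -> upclosed D ->
              (pi_poly tau eta setT C = pi_poly tau eta setT D <-> #|C| = #|D|) in
  let P3 := hierarchical T /\
              (forall u v : T, len u = len v -> eta u = eta v) in
  (P1 <-> P2) /\ (P2 <-> P3).
Proof.
cbv zeta.
have h13 : (forall C D : {set T}, upclosed C -> upclosed D ->
              #|C| = #|D| -> pi_poly tau eta setT C = pi_poly tau eta setT D) ->
           hierarchical T /\ (forall u v : T, len u = len v -> eta u = eta v).
  move=> P1.
  have P1' : P1_in tau eta setT by move=> C D /upT uC /upT uD; exact: P1.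
  case: (P1_P3 Htau Heta P1') => H1 H2; split.
    move=> u v; rewrite addn1 -!len_inT => lt; exact: H1.
  by move=> u v; rewrite -!len_inT; apply: H2.
have h32 : hierarchical T /\ (forall u v : T, len u = len v -> eta u = eta v) ->
    forall C D : {set T}, upclosed C -> upclosed D ->
              (pi_poly tau eta setT C = pi_poly tau eta setT D <-> #|C| = #|D|).
  case=> H1 H2 C D /upT uC /upT uD.
  apply: (P3_P2 Htau Heta) => //; split.
    by move=> u v _ _; rewrite !len_inT -addn1; apply: H1.
  by move=> u v _ _; rewrite !len_inT; apply: H2.
split; split.
- by move=> P1; apply: h32; apply: h13.
- by move=> P2 C D uC uD /(P2 C D uC uD).
- by move=> P2; apply: h13 => C D uC uD /(P2 C D uC uD).
- exact: h32.
Qed.
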